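(* Let $N=p^l$ with $p$ an odd prime, $l\ge1$, and $N\equiv1\pmod 4$. Let $i\in\mathbb{F}_N$ be one of the two elements with $i^2=-1$, and fix $\nu\in\bar{Q}$. For $\Delta\in\{1,-1\}$ and $t\in\mathbb{F}_N$ let $C_{\Delta,t}$ be the conjugacy class in $\mathrm{ESL}(2,\mathbb{F}_N)$ of $\begin{pmatrix}0&-\Delta\\1&t\end{pmatrix}$; for $t\in\{\pm2,\pm2i\}$ let $\bar{C}_t$ be the conjugacy class of $\begin{pmatrix}0&-\frac{t^2}{4\nu}\\ \nu&t\end{pmatrix}$ and $D_t$ the conjugacy class of $\begin{pmatrix}t/2&0\\0&t/2\end{pmatrix}$. Then the conjugacy classes of $\mathrm{ESL}(2,\mathbb{F}_N)$ are exactly the $2N$ classes $C_{\Delta,t}$ ($\Delta=\pm1$, $t\in\mathbb{F}_N$) together with the $8$ classes $\bar{C}_{\pm2},\bar{C}_{\pm2i},D_{\pm2},D_{\pm2i}$, and these $2N+8$ classes are pairwise distinct. Moreover, for $F=\begin{pmatrix}\alpha&\beta\\\gamma&\delta\end{pmatrix}\in\mathrm{ESL}(2,\mathbb{F}_N)$ with $\Delta=\det F$, $t=\operatorname{tr}F$: (1) if $t^2-4\Delta\neq0$ then $F\in C_{\Delta,t}$; (2) if $t^2-4\Delta=0$ then $F\in C_{\Delta,t}$ if $\beta\in Q$ or $\gamma\in Q$; $F\in\bar{C}_t$ if $\beta\in\bar{Q}$ or $\gamma\in\bar{Q}$; and $F\in D_t$ if $\beta=\gamma=0$. (When $t^2-4\Delta=0$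 it cannot happen that one of $\beta,\gamma$ lies in $Q$ and the other in $\bar{Q}$.)
   Context: $\mathbb{F}_N$ is the finite field with $N$ elements and $\mathbb{F}_N^{*}$ its nonzero elements. $Q=\{x\in\mathbb{F}_N^{*}: x=y^2\text{ for some }y\in\mathbb{F}_N^{*}\}$ and $\bar{Q}=\mathbb{F}_N^{*}\setminus Q$. $\mathrm{ESL}(2,\mathbb{F}_N)$ is the group of $2\times2$ matrices over $\mathbb{F}_N$ with determinant $\pm1$; conjugacy is taken within this group. *)

(* Defs.v *)
From HB Require Import structures.
From mathcomp Require Import all_boot all_order all_algebra.
Set Implicit Arguments. Unset Strict Implicit. Unset Printing Implicit Defensive.
Import GRing.Theory.
Local Open Scope ring_scope.

Section ESL.
Variable F : finFieldType.

Definition isQ (x : F) : bool := [exists y : F, (y != 0) && (x == y ^+ 2)].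
Definition isQbar (x : F) : bool := (x != 0) && ~~ isQ x.

Definition mx2 (a b c d : F) : 'M[F]_2 :=
  \matrix_(r < 2, s < 2)
    if r == ord0 then (if s == ord0 then a else b) else (if s == ord0 then c else d).

Definition i0 : 'I_2 := ord0.
Definition i1 : 'I_2 := ord_max.

Definition inESL (A : 'M[F]_2) : bool := (\det A == 1) || (\det A == -1).
Definition ESLset : {set 'M[F]_2} := [set A | inESL A].

Definition conj_class (A : 'M[F]_2) : {set 'M[F]_2} :=
  [set B | [exists P : 'M[F]_2, inESL P && (B == invmx P *m A *m P)]].

Definition ESL_classes : {set {set 'M[F]_2}} := [set conj_class A | A in ESLset].

Definition Cc (D t : F) : {set 'M[F]_2} := conj_class (mx2 0 (- D) 1 t).
Definition Cbar (nu t : F) : {set 'M[F]_2} :=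
  conj_class (mx2 0 (- (t ^+ 2 / (4%:R * nu))) nu t).
Definition Dc (t : F) : {set 'M[F]_2} := conj_class (mx2 (t / 2%:R) 0 0 (t / 2%:R)).

Definition signs : {set F} := [set 1; -1].
Definition T4 (i : F) : {set F} := [set 2%:R; - 2%:R; 2%:R * i; - (2%:R * i)].

End ESL.

(* Main.v *)
Require Import Defs.
From Stdlib Require Import Ring Field NArith PArith Lia.
From HB Require Import structures.
From mathcomp Require Import all_boot all_order all_algebra all_field.
From mathcomp Require cyclic.
Import GRing.Theory.
Local Open Scope ring_scope.

Section Infra.
Variable F : finFieldType.
Set Implicit Arguments. Unset Strict Implicit.
Definition addF (x y : F) : F := x + y.
Definition mulF (x y : F) : F := x * y.
Definition oppF (x : F) : F := - x.
Definition subF (x y : F) : F := addF x (oppF y).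
Definition zeroF : F := 0.
Definition oneF : F := 1.
Definition invF (x : F) : F := x^-1.
Definition divF (x y : F) : F := mulF x (invF y).
Definition powF (x : F) (n : nat) : F := x ^+ n.
Lemma Fth : @ring_theory F zeroF oneF addF mulF subF oppF eq.
Proof.
constructor=> //; [exact: add0r|exact: addrC|exact: addrA|exact: mul1r|exact: mulrC|exact: mulrA|exact: mulrDl|exact: subrr].
Qed.
Lemma Ffth : @field_theory F zeroF oneF addF mulF subF oppF divF invF eq.
Proof.
constructor; [exact: Fth|exact/eqP/oner_neq0|by []|by move=> p /eqP; exact: mulVf].
Qed.
Lemma Fpow : power_theory oneF mulF eq N.to_nat powF.
Proof.
constructor=> r [|p] //=; rewrite /powF.
elim: p => [p IH|p IH|] /=.
- rewrite Pos2Nat.inj_xI exprS -IH /mulF -exprD; congr (_ * _ ^+ _).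
  rewrite -plusE; lia.
- rewrite Pos2Nat.inj_xO -IH /mulF -exprD; congr (_ ^+ _).
  rewrite -plusE; lia.
by rewrite expr1.
Qed.
Ltac natcst t := match isnatcst t with | false => constr:(InitialRing.NotConstant) | _ => constr:(N.of_nat t) end.
Add Field Ffld : Ffth (power_tac Fpow [natcst]).

Ltac fnorm := repeat (match goal with
 | |- context C [@Algebra.add ?s ?x ?y] => let t := context C [addF x y] in change t
 | |- context C [@GRing.mul ?s ?x ?y] => let t := context C [mulF x y] in change t
 | |- context C [@Algebra.opp ?s ?x] => let t := context C [oppF x] in change t
 | |- context C [@Algebra.zero ?s] => let t := context C [zeroF] in change t
 | |- context C [@GRing.one ?s] => let t := context C [oneF] in change t
 | |- context C [@GRing.inv ?s ?x] => let t := context C [invF x] in change t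
 | |- context C [@GRing.exp ?s ?x ?n] => let t := context C [powF x n] in change t
 end); match goal with |- @eq _ ?x ?y => change (@eq F x y) end.
Ltac fring := rewrite ?mulrS ?mulr0n; fnorm; ring.
Ltac ffield := rewrite ?mulrS ?mulr0n; fnorm; field; repeat split; assumption.

Lemma eq_via (X Y L R K : F) : L = R -> X - Y = K * (L - R) -> X = Y.
Proof. by move=> -> /eqP; rewrite subrr mulr0 subr_eq0 => /eqP. Qed.

Lemma mx2E (a b c d : F) : (mx2 a b c d i0 i0 = a) * (mx2 a b c d i0 i1 = b)
  * (mx2 a b c d i1 i0 = c) * (mx2 a b c d i1 i1 = d).
Proof. by rewrite !mxE. Qed.

Lemma ord2P (P : 'I_2 -> Prop) : P i0 -> P i1 -> forall r, P r.
Proof.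
move=> h0 h1 [[|[|r]] hr] //.
- by have -> : Ordinal hr = i0 by apply: val_inj.
- by have -> : Ordinal hr = i1 by apply: val_inj.
Qed.

Lemma mx2_eta (A : 'M[F]_2) : A = mx2 (A i0 i0) (A i0 i1) (A i1 i0) (A i1 i1).
Proof.
by apply/matrixP; elim/ord2P => /=; elim/ord2P; rewrite mxE.
Qed.

Lemma mx2_eq (a b c d a' b' c' d' : F) :
  a = a' -> b = b' -> c = c' -> d = d' -> mx2 a b c d = mx2 a' b' c' d'.
Proof. by move=> -> -> -> ->. Qed.

Lemma mx2_mul (a b c d a' b' c' d' : F) : mx2 a b c d *m mx2 a' b' c' d' =
  mx2 (a*a'+b*c') (a*b'+b*d') (c*a'+d*c') (c*b'+d*d').
Proof.
apply/matrixP; elim/ord2P; elim/ord2P;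
by rewrite !mxE !big_ord_recl big_ord0 !mxE /= addr0.
Qed.

Lemma det_mx2 (a b c d : F) : \det (mx2 a b c d) = a * d - b * c.
Proof.
rewrite (expand_det_row _ i0) !big_ord_recl big_ord0 /cofactor !det_mx11 !mxE /=.
by rewrite expr0 expr1 mul1r addr0 mulN1r mulrN.
Qed.

Lemma tr_mx2 (a b c d : F) : \tr (mx2 a b c d) = a + d.
Proof. by rewrite /mxtrace !big_ord_recl big_ord0 !mxE /= addr0. Qed.


Definition rel (A B : 'M[F]_2) := exists P : 'M[F]_2, inESL P /\ P *m B = A *m P.

Lemma inESL_det0 (P : 'M[F]_2) : inESL P -> \det P != 0.
Proof. by case/orP=> /eqP ->; rewrite ?oppr_eq0 oner_eq0. Qed.

Lemma inESL_unit (P : 'M[F]_2) : inESL P -> P \in unitmx.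
Proof. by move=> h; rewrite unitmxE unitfE inESL_det0. Qed.

Lemma conjP (A B : 'M[F]_2) : B \in conj_class A <-> rel A B.
Proof.
rewrite inE; split.
  case/existsP => P /andP [hP /eqP ->]; exists P; split => //.
  by rewrite !mulmxA mulmxV ?mul1mx // inESL_unit.
case=> P [hP hPB]; apply/existsP; exists P; rewrite hP /=; apply/eqP.
by rewrite -mulmxA -hPB mulKmx // inESL_unit.
Qed.

Lemma inESL_mul (P Q : 'M[F]_2) : inESL P -> inESL Q -> inESL (P *m Q).
Proof.
rewrite /inESL det_mulmx => /orP[] /eqP -> /orP[] /eqP ->;
by rewrite ?mulr1 ?mulrN1 ?opprK eqxx ?orbT.
Qed.

Lemma inESL_inv (P : 'M[F]_2) : inESL P -> inESL (invmx P).
Proof.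
by rewrite /inESL det_inv => /orP[] /eqP ->; rewrite ?invr1 ?invrN1 eqxx ?orbT.
Qed.

Lemma inESL1 : inESL (1%:M : 'M[F]_2).
Proof. by rewrite /inESL det1 eqxx. Qed.

Lemma rel_refl (A : 'M[F]_2) : rel A A.
Proof. by exists 1%:M; rewrite inESL1 mul1mx mulmx1. Qed.

Lemma rel_eqB (A B P : 'M[F]_2) : inESL P -> P *m B = A *m P -> B = invmx P *m (A *m P).
Proof. by move=> hP hPB; rewrite -hPB mulKmx // inESL_unit. Qed.

Lemma rel_sym (A B : 'M[F]_2) : rel A B -> rel B A.
Proof.
case=> P [hP hPB]; exists (invmx P); split; first exact: inESL_inv.
by rewrite (rel_eqB hP hPB) -!mulmxA mulmxV ?mulmx1 // inESL_unit.
Qed.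

Lemma rel_trans (A B C : 'M[F]_2) : rel A B -> rel B C -> rel A C.
Proof.
case=> P [hP hPB] [Q [hQ hQC]]; exists (P *m Q); split; first exact: inESL_mul.
by rewrite -mulmxA hQC mulmxA hPB -mulmxA.
Qed.

Lemma class_eq (A B : 'M[F]_2) : B \in conj_class A -> conj_class B = conj_class A.
Proof.
move/conjP=> hAB; apply/setP=> X; apply/idP/idP => /conjP h; apply/conjP.
  exact: rel_trans hAB h.
exact: rel_trans (rel_sym hAB) h.
Qed.

Lemma rel_det (A B : 'M[F]_2) : rel A B -> \det B = \det A.
Proof.
case=> P [hP hPB]; have := congr1 determinant hPB.
by rewrite !det_mulmx [X in _ = X]mulrC => /mulfI; apply; apply: inESL_det0.
Qed.

Lemma rel_tr (A B : 'M[F]_2) : rel A B -> \tr B = \tr A.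
Proof.
case=> P [hP hPB]; rewrite (rel_eqB hP hPB) mxtrace_mulC -mulmxA mulmxV ?mulmx1 //.
exact: inESL_unit.
Qed.

Lemma mx2_scalar (l : F) : mx2 l 0 0 l = l%:M.
Proof. by apply/matrixP; elim/ord2P; elim/ord2P; rewrite !mxE. Qed.

Lemma rel_scalar (l : F) (B : 'M[F]_2) : rel (mx2 l 0 0 l) B -> B = mx2 l 0 0 l.
Proof.
case=> P [hP hPB]; rewrite (rel_eqB hP hPB) mx2_scalar -scalar_mxC mulKmx //.
exact: inESL_unit.
Qed.


Definition sq (x : F) := exists y, x = y ^+ 2.

Lemma isQ_sq (x : F) : isQ x -> x != 0 /\ sq x.
Proof.
case/existsP=> y /andP [hy /eqP ->]; split; last by exists y.
by rewrite expf_neq0.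
Qed.

Lemma sq_isQ (x : F) : x != 0 -> sq x -> isQ x.
Proof.
move=> hx [y hy]; apply/existsP; exists y; rewrite hy eqxx andbT.
by apply: contraNneq hx => y0; rewrite hy y0 expr0n.
Qed.

Lemma isQbarP (x : F) : isQbar x -> x != 0 /\ ~ sq x.
Proof. by case/andP=> hx hq; split => // /(sq_isQ hx); apply/negP. Qed.

Lemma sqM (x y : F) : sq x -> sq y -> sq (x * y).
Proof. by move=> [a ->] [b ->]; exists (a * b); rewrite exprMn. Qed.

Lemma sq_sqr (x : F) : sq (x ^+ 2).
Proof. by exists x. Qed.

Lemma sq_cancel (u v : F) : u != 0 -> sq u -> sq (u * v) -> sq v.
Proof.
move=> hu [w hw] [z hz]; exists (z / w).
have hw0 : w != 0 by apply: contraNneq hu => w0; rewrite hw w0 expr0n.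
by rewrite expr_div_n -hz -hw mulrAC mulfV // mul1r.
Qed.

Lemma sq_inv (u : F) : sq u -> sq (u^-1).
Proof. by case=> w ->; exists w^-1; rewrite exprVn. Qed.

Lemma nonsq_mul (u v : F) : isQbar u -> isQbar v -> isQ (u * v).
Proof.
move=> /isQbarP [hu nu] /isQbarP [hv nv].
set n := #|F|.-1.
have n_gt0 : (0 < n)%N by rewrite /n -ltnS prednK ?card_finNzRing_gt1 // ltnW // card_finNzRing_gt1.
have unit1 (x : F) : x != 0 -> x ^+ n = 1.
  move=> hx; apply: (mulfI hx); rewrite mulr1 -exprS /n prednK ?expf_card //.
  exact: ltnW (card_finNzRing_gt1 F).
have /hasP[z _ hz] : has n.-primitive_root (enum (predC1 (0:F))).
  apply: cyclic.has_prim_root => //.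
- by apply/allP=> x; rewrite mem_enum => hx; rewrite unity_rootE unit1.
- exact: enum_uniq.
  by rewrite -cardE cardC1.
have hz0 : z != 0.
  apply/eqP=> z0; have := prim_expr_order hz.
  by rewrite z0 expr0n gtn_eqF //= => /eqP; rewrite eq_sym oner_eq0.
have even_sq k : ~~ odd k -> sq (z ^+ k).
  move=> hk; exists (z ^+ k./2); rewrite -exprM muln2.
  by rewrite -[k in LHS]odd_double_half (negbTE hk).
have [j hj] := prim_rootP hz (unit1 _ hu).
have [k hk] := prim_rootP hz (unit1 _ hv).
apply: sq_isQ; first by rewrite mulf_neq0.
have oj : odd j by apply/negPn/negP => /even_sq; rewrite -hj.
have ok : odd k by apply/negPn/negP => /even_sq; rewrite -hk.
by rewrite hj hk -exprD; apply: even_sq; rewrite oddD oj ok.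
Qed.


Lemma eq_via2 (X Y L1 R1 L2 R2 K1 K2 : F) : L1 = R1 -> L2 = R2 ->
  X - Y = K1 * (L1 - R1) + K2 * (L2 - R2) -> X = Y.
Proof. by move=> -> -> /eqP; rewrite !subrr !mulr0 addr0 subr_eq0 => /eqP. Qed.

Lemma two_facts (h2 : (2%:R : F) != 0) :
  [/\ (1 + 1 : F) <> 0, ((1 + 1) * (1 + 1) : F) <> 0 & (1 + (1 + (1 + 1)) : F) <> 0].
Proof.
have e2 : (1 + 1 : F) = 2%:R by rewrite mulrS mulr1n.
have e4 : (1 + (1 + (1 + 1)) : F) = (1 + 1) * (1 + 1) by fring.
rewrite e4 e2; split; apply/eqP => //; exact: mulf_neq0.
Qed.

Definition Pw (a b c e x y : F) := mx2 (- x * e + y * c) (x * b - y * a) x y.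

Lemma Pw_rel (a b c e x y : F) :
  Pw a b c e x y *m mx2 a b c e = mx2 0 (-(a * e - b * c)) 1 (a + e) *m Pw a b c e x y.
Proof. by rewrite /Pw !mx2_mul; apply: mx2_eq; fring. Qed.

Lemma Pw_det (a b c e x y : F) :
  \det (Pw a b c e x y) = c * y ^+ 2 + (a - e) * x * y - b * x ^+ 2.
Proof. by rewrite /Pw det_mx2; fring. Qed.

Lemma Pw_scale (a b c e x y s : F) : s != 0 ->
  \det (Pw a b c e (x / s) (y / s)) = (c * y ^+ 2 + (a - e) * x * y - b * x ^+ 2) / s ^+ 2.
Proof. by move/eqP=> hs; rewrite Pw_det; ffield. Qed.

Lemma transfer (A C M P R : 'M[F]_2) : P *m A = C *m P -> R *m M = C *m R ->
  R \in unitmx -> \det P = \det R -> A \in conj_class M.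
Proof.
move=> hP hR uR hd; apply/conjP; exists (invmx R *m P); split.
  rewrite /inESL det_mulmx det_inv hd mulVf ?eqxx //.
  by rewrite unitmxE unitfE in uR.
have hM : M = invmx R *m (C *m R) by rewrite -hR mulKmx.
by rewrite -mulmxA hP hM -!mulmxA mulKVmx.
Qed.

Lemma memC (a b c e x y s : F) : s != 0 ->
  c * y ^+ 2 + (a - e) * x * y - b * x ^+ 2 = s ^+ 2 ->
  mx2 a b c e \in conj_class (mx2 0 (-(a * e - b * c)) 1 (a + e)).
Proof.
move=> hs hQ; apply/conjP; exists (Pw a b c e (x / s) (y / s)); split; last exact: Pw_rel.
by rewrite /inESL Pw_scale // hQ divff ?expf_neq0 // eqxx.
Qed.

Lemma memCbar (a b c e x y s nu : F) : nu != 0 -> (2%:R : F) != 0 -> s != 0 ->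
  (a + e) ^+ 2 - 4%:R * (a * e - b * c) = 0 ->
  c * y ^+ 2 + (a - e) * x * y - b * x ^+ 2 = nu * s ^+ 2 ->
  mx2 a b c e \in conj_class (mx2 0 (- ((a + e) ^+ 2 / (4%:R * nu))) nu (a + e)).
Proof.
move=> hnu h2 hs hdeg hQ.
have [H2 H4 H4'] := two_facts h2.
apply: (transfer (Pw_rel a b c e (x / s) (y / s)) (R := mx2 nu 0 0 1)).
- rewrite !mx2_mul; apply: mx2_eq; try fring.
  apply: (eq_via (K := - (4%:R)^-1) hdeg).
  move/eqP: hnu => hnu'; ffield.
- by rewrite unitmxE det_mx2 unitfE mulr1 mulr0 subr0.
- by rewrite Pw_scale // hQ det_mx2 mulr1 mulr0 subr0 mulfK // expf_neq0.
Qed.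


Lemma Q_form (w : F) : isQ w -> exists2 s, s != 0 & w = s ^+ 2.
Proof. by case/existsP=> y /andP [hy /eqP ->]; exists y. Qed.

Lemma Qbar_form (nu w : F) : isQbar nu -> isQbar w -> exists2 s, s != 0 & w = nu * s ^+ 2.
Proof.
move=> hnu hw; have [k hk0 hk] := Q_form (nonsq_mul hw hnu).
have nu0 : nu != 0 by case/andP: hnu.
exists (k / nu); first by rewrite mulf_neq0 ?invr_eq0.
apply: (eq_via (K := nu^-1) hk); move/eqP: nu0 => nu0; ffield.
Qed.

Lemma sqN1 (i : F) : i ^+ 2 = -1 -> sq (-1).
Proof. by move=> hi; exists i. Qed.

Lemma isQbarN (i w : F) : i ^+ 2 = -1 -> isQbar w -> isQbar (- w).
Proof.
move=> hi /andP [hw hq]; rewrite /isQbar oppr_eq0 hw /=; apply/negP => /isQ_sq [_ h].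
move/negP: hq; apply; apply: sq_isQ => //.
by have := sqM (sqN1 hi) h; rewrite mulN1r opprK.
Qed.

Lemma isQ0 : isQ (0 : F) = false.
Proof. by apply/negbTE/negP => /isQ_sq []; rewrite eqxx. Qed.

Lemma isQbar0 : isQbar (0 : F) = false.
Proof. by rewrite /isQbar eqxx. Qed.

Lemma Dform (a b c e : F) :
  (a + e) ^+ 2 - 4%:R * (a * e - b * c) = (a - e) ^+ 2 + 4%:R * b * c.
Proof. fring. Qed.

Lemma QL1 (b m : F) : m != 0 ->
  0 * ((1 + b) / m) ^+ 2 + m * 1 * ((1 + b) / m) - b * 1 ^+ 2 = 1 ^+ 2.
Proof. by move/eqP=> hm; ffield. Qed.

Lemma QL2 (b c m g : F) : c != 0 -> g != 0 -> (2%:R : F) != 0 ->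
  g ^+ 2 = m ^+ 2 + 4%:R * b * c ->
  c * (((1 + c) - m * ((c - 1) / g)) / (2%:R * c)) ^+ 2
  + m * ((c - 1) / g) * (((1 + c) - m * ((c - 1) / g)) / (2%:R * c))
  - b * ((c - 1) / g) ^+ 2 = 1 ^+ 2.
Proof.
move=> /eqP hc /eqP hg h2 hD; have [H2 H4 H4'] := two_facts h2.
apply: (eq_via (K := (c - 1) ^+ 2 / (4%:R * c * g ^+ 2)) hD); ffield.
Qed.

Lemma QL3 (b c m k : F) : c != 0 -> (2%:R : F) != 0 ->
  k ^+ 2 = - (m ^+ 2 + 4%:R * b * c) * c ->
  c * (- m / (2%:R * c)) ^+ 2 + m * 1 * (- m / (2%:R * c)) - b * 1 ^+ 2
  = (k / (2%:R * c)) ^+ 2.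
Proof.
move=> /eqP hc h2 hk; have [H2 H4 H4'] := two_facts h2.
apply: (eq_via (K := - (4%:R * c ^+ 2)^-1) hk); ffield.
Qed.

Lemma mem_nondeg (i a b c e : F) : i ^+ 2 = -1 -> (2%:R : F) != 0 ->
  (a + e) ^+ 2 - 4%:R * (a * e - b * c) != 0 ->
  mx2 a b c e \in conj_class (mx2 0 (-(a * e - b * c)) 1 (a + e)).
Proof.
move=> hi h2; rewrite Dform => hD.
have [c0|cn0] := eqVneq c 0.
  subst c; apply: (memC (x := 1) (y := (1 + b) / (a - e)) (s := 1)); first exact: oner_neq0.
  apply: QL1; apply/eqP => hm; move: hD; by rewrite hm mulr0 addr0 expr0n eqxx.
have [hc|hc] := boolP (isQ c).
  case: (Q_form hc) => s hs0 hcs.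
  by apply: (memC (x := 0) (y := 1) (s := s)) => //; rewrite -hcs; fring.
have hcb : isQbar c by rewrite /isQbar cn0 hc.
have [hDq|hDq] := boolP (isQ ((a - e) ^+ 2 + 4%:R * b * c)).
  case: (Q_form hDq) => g hg0 hg.
  apply: (memC (x := (c - 1) / g) (y := ((1 + c) - (a - e) * ((c - 1) / g)) / (2%:R * c)) (s := 1)).
    exact: oner_neq0.
  by apply: QL2 => //; rewrite hg.
have hDb : isQbar (- ((a - e) ^+ 2 + 4%:R * b * c)).
  by apply: (isQbarN hi); rewrite /isQbar hD hDq.
case: (Q_form (nonsq_mul hDb hcb)) => k hk0 hk.
apply: (memC (x := 1) (y := - (a - e) / (2%:R * c)) (s := k / (2%:R * c))).
  by rewrite mulf_neq0 // invr_neq0 // mulf_neq0.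
by apply: QL3 => //; rewrite hk.
Qed.

Lemma nomix (i a b c e : F) : i ^+ 2 = -1 -> (2%:R : F) != 0 ->
  (a + e) ^+ 2 - 4%:R * (a * e - b * c) = 0 ->
  ~~ ((isQ b && isQbar c) || (isQbar b && isQ c)).
Proof.
move=> hi h2 hdeg; have [H2 H4 H4'] := two_facts h2.
have sbc : sq (b * c).
  exists (i * (a - e) / 2%:R).
  apply: (eq_via2 (K1 := - (a - e) ^+ 2 / 4%:R) (K2 := 4%:R^-1) hi hdeg); ffield.
apply/negP; case/orP => /andP [h1 h3].
  have [hb sb] := isQ_sq h1; have [_ nc] := isQbarP h3.
  by apply: nc; apply: sq_cancel hb sb sbc.
have [hc sc] := isQ_sq h3; have [_ nb] := isQbarP h1.
by apply: nb; apply: sq_cancel hc sc _; rewrite mulrC.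
Qed.


Lemma i_neq0 (i : F) : i ^+ 2 = -1 -> i != 0.
Proof.
move=> hi; apply/eqP=> i0; move: hi; rewrite i0 expr0n /= => /eqP.
by rewrite eq_sym oppr_eq0 oner_eq0.
Qed.

Lemma mem_deg_Q (i a b c e : F) : i ^+ 2 = -1 -> (2%:R : F) != 0 ->
  (a + e) ^+ 2 - 4%:R * (a * e - b * c) = 0 -> isQ b || isQ c ->
  mx2 a b c e \in conj_class (mx2 0 (-(a * e - b * c)) 1 (a + e)).
Proof.
move=> hi h2 hdeg hQ.
have [c0|cn0] := eqVneq c 0.
  subst c; have hb : isQ b by move: hQ; rewrite isQ0 orbF.
  case: (Q_form hb) => s hs0 hbs.
  apply: (memC (x := 1) (y := 0) (s := i * s)); first by rewrite mulf_neq0 // i_neq0.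
  by rewrite hbs exprMn hi; fring.
have [hc|hc] := boolP (isQ c).
  case: (Q_form hc) => s hs0 hcs.
  by apply: (memC (x := 0) (y := 1) (s := s)) => //; rewrite -hcs; fring.
have hb : isQ b by move: hQ; rewrite (negbTE hc) orbF.
by move: (nomix hi h2 hdeg); rewrite hb /isQbar cn0 hc.
Qed.

Lemma mem_deg_Qbar (i nu a b c e : F) : i ^+ 2 = -1 -> (2%:R : F) != 0 -> isQbar nu ->
  (a + e) ^+ 2 - 4%:R * (a * e - b * c) = 0 -> isQbar b || isQbar c ->
  mx2 a b c e \in conj_class (mx2 0 (- ((a + e) ^+ 2 / (4%:R * nu))) nu (a + e)).
Proof.
move=> hi h2 hnu hdeg hQ.
have nu0 : nu != 0 by case/andP: hnu.
have [c0|cn0] := eqVneq c 0.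
  subst c; have hb : isQbar b by move: hQ; rewrite isQbar0 orbF.
  case: (Qbar_form hnu (isQbarN hi hb)) => s hs0 hbs.
  apply: (memCbar (x := 1) (y := 0) (s := s)) => //.
  by rewrite -hbs; fring.
have [hc|hc] := boolP (isQ c).
  have hb : isQbar b by move: hQ; rewrite /isQbar cn0 hc orbF.
  by move: (nomix hi h2 hdeg); rewrite hb hc orbT.
have hcb : isQbar c by rewrite /isQbar cn0 hc.
case: (Qbar_form hnu hcb) => s hs0 hcs.
by apply: (memCbar (x := 0) (y := 1) (s := s)) => //; rewrite -hcs; fring.
Qed.

Lemma mem_deg_D (a b c e : F) : (2%:R : F) != 0 ->
  (a + e) ^+ 2 - 4%:R * (a * e - b * c) = 0 -> b = 0 -> c = 0 ->
  mx2 a b c e \in conj_class (mx2 ((a + e) / 2%:R) 0 0 ((a + e) / 2%:R)).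
Proof.
move=> h2 hdeg b0 c0; subst b c.
move: hdeg; rewrite Dform mulr0 addr0 => /eqP; rewrite expf_eq0 /= subr_eq0 => /eqP ae.
subst e; have [H2 H4 H4'] := two_facts h2.
have -> : (a + a) / 2%:R = a by ffield.
by apply/conjP; apply: rel_refl.
Qed.

Lemma noflip (i a b c e a' b' c' e' : F) : (2%:R : F) != 0 -> i ^+ 2 = -1 ->
  (a + e) ^+ 2 - 4%:R * (a * e - b * c) = 0 ->
  mx2 a' b' c' e' \in conj_class (mx2 a b c e) -> isQ c -> c' != 0 -> isQ c'.
Proof.
move=> h2 hi hdeg /conjP [P [hP hPB]] hc hc'.
move: hP hPB; rewrite [P]mx2_eta; move: (P i0 i0) (P i0 i1) (P i1 i0) (P i1 i1) => p q r s.
rewrite /inESL det_mx2 !mx2_mul => hd hPB.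
have e00 := congr1 (fun M : 'M[F]_2 => M i0 i0) hPB.
have e10 := congr1 (fun M : 'M[F]_2 => M i1 i0) hPB.
rewrite /= !mxE /= in e00 e10.
set d := p * s - q * r in hd.
have hdc : d * c' = c * p ^+ 2 - (a - e) * p * r - b * r ^+ 2.
  by apply: (eq_via2 (K1 := - r) (K2 := p) e00 e10); rewrite /d; fring.
have h4 : 4%:R * d * (c * c') = (2%:R * c * p - (a - e) * r) ^+ 2.
  by apply: (eq_via2 (K1 := 4%:R * c) (K2 := - r ^+ 2) hdc hdeg); fring.
have [cn0 sc] := isQ_sq hc.
have d0 : d != 0 by case/orP: hd => /eqP ->; rewrite ?oppr_eq0 oner_eq0.
have sd : sq (4%:R * d).
  apply: sqM; first by exists 2%:R; rewrite expr2 -natrM.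
  by case/orP: hd => /eqP ->; [exists 1; rewrite expr1n | exact: sqN1 hi].
have n4 : (4%:R * d : F) != 0.
  by rewrite mulf_neq0 // (_ : 4%:R = 2%:R * 2%:R) ?mulf_neq0 // -natrM.
have scc : sq (c * c') by apply: sq_cancel n4 sd _; rewrite h4; exact: sq_sqr.
by apply: sq_isQ => //; apply: sq_cancel cn0 sc scc.
Qed.


Lemma neq_via (x y k : F) : k != 0 -> x - y = k -> x != y.
Proof. by move=> hk hxy; apply: contraNneq hk => exy; rewrite -hxy exy subrr. Qed.

Lemma i_facts (i : F) : (2%:R : F) != 0 -> i ^+ 2 = -1 -> (1 - i != 0) /\ (1 + i != 0).
Proof.
move=> h2 hi; have : (1 - i) * (1 + i) = 2%:R.
  apply: (eq_via (K := -1) hi); fring.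
move=> e; have : (1 - i) * (1 + i) != 0 by rewrite e.
by rewrite mulf_eq0 negb_or => /andP.
Qed.

Lemma signs_neq (h2 : (2%:R : F) != 0) : (1 : F) != -1.
Proof. by apply: (neq_via h2); fring. Qed.

Lemma T4_card (i : F) : (2%:R : F) != 0 -> i ^+ 2 = -1 -> #|T4 i| = 4.
Proof.
move=> h2 hi; have [n1 n2] := i_facts h2 hi.
have hi0 := i_neq0 hi.
have e : T4 i =i [:: 2%:R; - 2%:R; 2%:R * i; - (2%:R * i)].
  by move=> x; rewrite !inE orbA orbA.
rewrite (eq_card e); apply/card_uniqP; rewrite /= !inE !negb_or /= !andbT.
rewrite (neq_via (k := 2%:R * 2%:R)) ?mulf_neq0 //=; last by fring.
rewrite (neq_via (k := 2%:R * (1 - i))) ?mulf_neq0 //=; last by fring.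
rewrite (neq_via (k := 2%:R * (1 + i))) ?mulf_neq0 //=; last by fring.
rewrite (neq_via (k := - 2%:R * (1 + i))) ?mulf_neq0 ?oppr_eq0 //=; last by fring.
rewrite (neq_via (k := - 2%:R * (1 - i))) ?mulf_neq0 ?oppr_eq0 //=; last by fring.
by rewrite (neq_via (k := 2%:R * 2%:R * i)) ?mulf_neq0 //=; fring.
Qed.


Lemma T4_deg (i t D : F) : (2%:R : F) != 0 -> i ^+ 2 = -1 -> (D == 1) || (D == -1) ->
  t ^+ 2 - 4%:R * D = 0 -> t \in T4 i.
Proof.
move=> h2 hi hD hdeg; have ht : t ^+ 2 = 4%:R * D by apply/eqP; rewrite -subr_eq0 hdeg.
case/orP: hD => /eqP hD; subst D.
  have : t ^+ 2 == (2%:R) ^+ 2 by apply/eqP; rewrite ht; fring.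
  by rewrite eqf_sqr => /orP [] /eqP ->; rewrite !inE eqxx ?orbT.
have : t ^+ 2 == (2%:R * i) ^+ 2 by apply/eqP; rewrite ht exprMn hi; fring.
by rewrite eqf_sqr => /orP [] /eqP ->; rewrite !inE eqxx ?orbT.
Qed.

Lemma T4_det (i t : F) : (2%:R : F) != 0 -> i ^+ 2 = -1 -> t \in T4 i ->
  (t ^+ 2 / 4%:R == 1) || (t ^+ 2 / 4%:R == -1).
Proof.
move=> h2 hi; have [H2 H4 H4'] := two_facts h2.
rewrite !inE -!orbA => /or4P [] /eqP ->; apply/orP.
- by left; apply/eqP; ffield.
- by left; apply/eqP; ffield.
- by right; apply/eqP; rewrite exprMn hi; ffield.
- by right; apply/eqP; rewrite sqrrN exprMn hi; ffield.
Qed.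

Lemma det_Cbar (nu t : F) : nu != 0 -> (2%:R : F) != 0 ->
  \det (mx2 0 (- (t ^+ 2 / (4%:R * nu))) nu t) = t ^+ 2 / 4%:R.
Proof. move=> /eqP hnu h2; have [H2 H4 H4'] := two_facts h2; rewrite det_mx2; ffield. Qed.

Lemma det_Dc (t : F) : (2%:R : F) != 0 ->
  \det (mx2 (t / 2%:R) 0 0 (t / 2%:R)) = t ^+ 2 / 4%:R.
Proof. move=> h2; have [H2 H4 H4'] := two_facts h2; rewrite det_mx2; ffield. Qed.

Lemma det_C (D t : F) : \det (mx2 0 (- D) 1 t) = D.
Proof. by rewrite det_mx2; fring. Qed.

Lemma class_rep (M : 'M[F]_2) : M \in conj_class M.
Proof. by apply/conjP; apply: rel_refl. Qed.

Lemma Cc_inj (D1 D2 t1 t2 : F) : Cc D1 t1 = Cc D2 t2 -> D1 = D2 /\ t1 = t2.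
Proof.
move=> e; have : mx2 0 (- D1) 1 t1 \in Cc D2 t2 by rewrite -e; apply: class_rep.
move/conjP=> h; have := rel_det h; have := rel_tr h.
by rewrite !det_C !tr_mx2 !add0r => -> ->.
Qed.

Lemma Cbar_inj (nu t1 t2 : F) : Cbar nu t1 = Cbar nu t2 -> t1 = t2.
Proof.
move=> e; have : mx2 0 (- (t1 ^+ 2 / (4%:R * nu))) nu t1 \in Cbar nu t2.
  by rewrite -e; apply: class_rep.
by move/conjP=> h; have := rel_tr h; rewrite !tr_mx2 !add0r.
Qed.

Lemma tr_Dc (t : F) : (2%:R : F) != 0 -> \tr (mx2 (t / 2%:R) 0 0 (t / 2%:R)) = t.
Proof. move=> h2; have [H2 H4 H4'] := two_facts h2; rewrite tr_mx2; ffield. Qed.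

Lemma Dc_inj (t1 t2 : F) : (2%:R : F) != 0 -> Dc t1 = Dc t2 -> t1 = t2.
Proof.
move=> h2 e; have : mx2 (t1 / 2%:R) 0 0 (t1 / 2%:R) \in Dc t2.
  by rewrite -e; apply: class_rep.
by move/conjP=> h; have := rel_tr h; rewrite !tr_Dc.
Qed.

Lemma Cc_Cbar (i nu D t t' : F) : (2%:R : F) != 0 -> i ^+ 2 = -1 -> isQbar nu ->
  Cc D t <> Cbar nu t'.
Proof.
move=> h2 hi hnu e; have nu0 : nu != 0 by case/andP: hnu.
have [H2 H4 H4'] := two_facts h2.
have hM : mx2 0 (- (t' ^+ 2 / (4%:R * nu))) nu t' \in Cc D t by rewrite e; apply: class_rep.
have h := hM; move/conjP: h => h.
have hd := rel_det h; have ht := rel_tr h.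
rewrite det_Cbar // det_C in hd; rewrite !tr_mx2 !add0r in ht.
have hq : isQ nu.
  apply: (noflip h2 hi _ hM) => //.
    rewrite -hd -ht; ffield.
  by apply: sq_isQ; [exact: oner_neq0 | exists 1; rewrite expr1n].
by move: hnu; rewrite /isQbar hq andbF.
Qed.

Lemma Cc_Dc (D t t' : F) : Cc D t <> Dc t'.
Proof.
move=> e; have : mx2 0 (- D) 1 t \in Dc t' by rewrite -e; apply: class_rep.
move/conjP/rel_scalar=> h; have := congr1 (fun M : 'M[F]_2 => M i1 i0) h.
by rewrite !mxE /=; apply/eqP; rewrite oner_eq0.
Qed.

Lemma Cbar_Dc (nu t t' : F) : nu != 0 -> Cbar nu t <> Dc t'.
Proof.
move=> hnu e; have : mx2 0 (- (t ^+ 2 / (4%:R * nu))) nu t \in Dc t'.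
  by rewrite -e; apply: class_rep.
move/conjP/rel_scalar=> h; have := congr1 (fun M : 'M[F]_2 => M i1 i0) h.
by rewrite !mxE /=; apply/eqP.
Qed.

Lemma crit_mx2 (i nu a b c e : F) : (2%:R : F) != 0 -> i ^+ 2 = -1 -> isQbar nu ->
  ((a + e) ^+ 2 - 4%:R * (a * e - b * c) != 0 -> mx2 a b c e \in Cc (a * e - b * c) (a + e))
  /\ ((a + e) ^+ 2 - 4%:R * (a * e - b * c) = 0 ->
       ((isQ b || isQ c) -> mx2 a b c e \in Cc (a * e - b * c) (a + e))
       /\ ((isQbar b || isQbar c) -> mx2 a b c e \in Cbar nu (a + e))
       /\ (b = 0 /\ c = 0 -> mx2 a b c e \in Dc (a + e))
       /\ ~ ((isQ b && isQbar c) || (isQbar b && isQ c))).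
Proof.
move=> h2 hi hnu; split; first exact: mem_nondeg hi h2.
move=> hdeg; split; first exact: mem_deg_Q hi h2 hdeg.
split; first exact: mem_deg_Qbar hi h2 hnu hdeg.
split; first by case=> hb hc; apply: mem_deg_D.
by apply/negP; apply: nomix hi h2 hdeg.
Qed.

End Infra.

Theorem mainTheorem4 (F : finFieldType) (p l : nat)
  (hp : prime p) (hodd : odd p) (hl : (0 < l)%N)
  (hN : #|F| = (p ^ l)%N) (hmod : (#|F| %% 4 = 1)%N)
  (i : F) (hi : i ^+ 2 = -1) (nu : F) (hnu : isQbar nu) :
  (* the conjugacy classes are exactly the listed ones *)
  ESL_classes F =
    [set Cc D t | D in signs F, t in [set: F]] :|: [set Cbar nu t | t in T4 i]
      :|: [set Dc t | t in T4 i]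
  /\ #|ESL_classes F| = (2 * #|F| + 8)%N
  (* pairwise distinctness *)
  /\ (forall D1 D2 t1 t2, D1 \in signs F -> D2 \in signs F ->
        Cc D1 t1 = Cc D2 t2 -> D1 = D2 /\ t1 = t2)
  /\ {in T4 i &, injective (Cbar nu)}
  /\ {in T4 i &, injective (@Dc F)}
  /\ (forall D t t', D \in signs F -> t' \in T4 i ->
        Cc D t <> Cbar nu t' /\ Cc D t <> Dc t')
  /\ (forall t t', t \in T4 i -> t' \in T4 i -> Cbar nu t <> Dc t')
  (* membership criteria *)
  /\ (forall A : 'M[F]_2, inESL A ->
        let D := \det A in let t := \tr A in
        let b := A i0 i1 in let c := A i1 i0 in
        (t ^+ 2 - 4%:R * D != 0 -> A \in Cc D t)
        /\ (t ^+ 2 - 4%:R * D = 0 ->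
              ((isQ b || isQ c) -> A \in Cc D t)
              /\ ((isQbar b || isQbar c) -> A \in Cbar nu t)
              /\ (b = 0 /\ c = 0 -> A \in Dc t)
              /\ ~ ((isQ b && isQbar c) || (isQbar b && isQ c)))).
Proof.
have h2 : (2%:R : F) != 0.
  have pc := card_finPcharP hN hp.
  rewrite -(dvdn_pcharf pc) dvdn_prime2 //; apply/eqP => p2; by rewrite p2 in hodd.
have nu0 : nu != 0 by case/andP: hnu.
have hcrit : forall A : 'M[F]_2, inESL A ->
        let D := \det A in let t := \tr A in
        let b := A i0 i1 in let c := A i1 i0 in
        (t ^+ 2 - 4%:R * D != 0 -> A \in Cc D t)
        /\ (t ^+ 2 - 4%:R * D = 0 ->
              ((isQ b || isQ c) -> A \in Cc D t)
              /\ ((isQbar b || isQbar c) -> A \in Cbar nu t)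
              /\ (b = 0 /\ c = 0 -> A \in Dc t)
              /\ ~ ((isQ b && isQbar c) || (isQbar b && isQ c))).
  move=> A _ D t b c; rewrite {}/D {}/t {}/b {}/c.
  have := crit_mx2 (A i0 i0) (A i0 i1) (A i1 i0) (A i1 i1) h2 hi hnu.
  rewrite -(mx2_eta A).
  have -> : \det A = A i0 i0 * A i1 i1 - A i0 i1 * A i1 i0 by rewrite {1}[A]mx2_eta det_mx2.
  by have -> : \tr A = A i0 i0 + A i1 i1 by rewrite {1}[A]mx2_eta tr_mx2.
set S1 := [set Cc D t | D in signs F, t in [set: F]].
set S2 := [set Cbar nu t | t in T4 i].
set S3 := [set Dc t | t in T4 i].
have hclass : ESL_classes F = S1 :|: S2 :|: S3.
  apply/setP => X; apply/idP/idP.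
    case/imsetP => A; rewrite inE => hA ->.
    have hD : (\det A == 1) || (\det A == -1) := hA.
    have inS1 : A \in Cc (\det A) (\tr A) -> conj_class A \in S1 :|: S2 :|: S3.
      move/class_eq ->; rewrite !in_setU; apply/orP; left; apply/orP; left.
      by apply/imset2P; exists (\det A) (\tr A); rewrite // !inE.
    have inS2 : A \in Cbar nu (\tr A) -> \tr A \in T4 i -> conj_class A \in S1 :|: S2 :|: S3.
      move/class_eq -> => ht; rewrite !in_setU; apply/orP; left; apply/orP; right.
      by apply/imsetP; exists (\tr A).
    have inS3 : A \in Dc (\tr A) -> \tr A \in T4 i -> conj_class A \in S1 :|: S2 :|: S3.
      move/class_eq -> => ht; rewrite !in_setU; apply/orP; right.
      by apply/imsetP; exists (\tr A).
    have [hnd hd] := hcrit A hA.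
    have [hdeg|hdeg] := eqVneq (\tr A ^+ 2 - 4%:R * \det A) 0; last exact: inS1 (hnd hdeg).
    have [hQ [hQb [hDz _]]] := hd hdeg.
    have tT : \tr A \in T4 i := T4_deg h2 hi hD hdeg.
    have [b0|bn0] := eqVneq (A i0 i1) 0.
      have [c0|cn0] := eqVneq (A i1 i0) 0; first exact: inS3 (hDz (conj b0 c0)) tT.
      have [hc|hc] := boolP (isQ (A i1 i0)); first by apply: inS1; apply: hQ; rewrite hc orbT.
      by apply: inS2 tT; apply: hQb; rewrite /isQbar cn0 hc orbT.
    have [hb|hb] := boolP (isQ (A i0 i1)); first by apply: inS1; apply: hQ; rewrite hb.
    by apply: inS2 tT; apply: hQb; rewrite /isQbar bn0 hb.
  rewrite !in_setU => /orP [/orP [] |].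
  - case/imset2P => D t hDs _ ->; rewrite /Cc; apply: imset_f.
    by rewrite inE /inESL det_C; move: hDs; rewrite !inE.
  - case/imsetP => t ht ->; rewrite /Cbar; apply: imset_f.
    by rewrite inE /inESL det_Cbar //; exact: T4_det ht.
  - case/imsetP => t ht ->; rewrite /Dc; apply: imset_f.
    by rewrite inE /inESL det_Dc //; exact: T4_det ht.
have d12 : S1 :&: S2 = set0.
  apply/setP=> X; rewrite in_setI in_set0; apply/negbTE/negP.
  by case/andP => /imset2P [D t _ _ ->] /imsetP [t' _ /(Cc_Cbar h2 hi hnu)].
have d13 : S1 :&: S3 = set0.
  apply/setP=> X; rewrite in_setI in_set0; apply/negbTE/negP.
  by case/andP => /imset2P [D t _ _ ->] /imsetP [t' _ /Cc_Dc].
have d23 : S2 :&: S3 = set0.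
  apply/setP=> X; rewrite in_setI in_set0; apply/negbTE/negP.
  by case/andP => /imsetP [t _ ->] /imsetP [t' _ /(Cbar_Dc nu0)].
split; first exact: hclass.
split.
  rewrite hclass cardsU setIUl d13 d23 setU0 cards0 subn0 cardsU d12 cards0 subn0.
  have c1 : #|S1| = (2 * #|F|)%N.
    rewrite /S1 curry_imset2X card_in_imset; last first.
      by move=> [D1 t1] [D2 t2] _ _ /= /Cc_inj [-> ->].
    by rewrite cardsX cardsT /signs cards2 signs_neq.
  have c2 : #|S2| = 4%N.
    by rewrite card_in_imset ?T4_card // => t1 t2 _ _; apply: Cbar_inj.
  have c3 : #|S3| = 4%N.
    by rewrite card_in_imset ?T4_card // => t1 t2 _ _; apply: Dc_inj.
  by rewrite c1 c2 c3 -addnA.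
split; first by move=> D1 D2 t1 t2 _ _; apply: Cc_inj.
split; first by move=> t1 t2 _ _; apply: Cbar_inj.
split; first by move=> t1 t2 _ _; apply: Dc_inj.
split; first by move=> D t t' _ _; split; [exact: Cc_Cbar h2 hi hnu | exact: Cc_Dc].
split; first by move=> t t' _ _; exact: Cbar_Dc.
exact: hcrit.
Qed.
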